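(* Let $G$ be a finite group with regular representation $\rho_{\mathrm{reg}}$, and let $\mathcal{R}$ be a set of finite-dimensional representations of $G$ closed under tensor product, containing the trivial representation and $\rho_{\mathrm{reg}}$. Then for all $\sigma\in\hat{\mathcal{R}}$ and $\sigma'\in\mathcal{R}$ one has $\sigma/\sigma'=\dim(\sigma)/\dim(\sigma')$ in the algebraic localization $\mathcal{R}^{-1}\hat{\mathcal{R}}$; consequently $\mathcal{R}^{-1}\hat{\mathcal{R}}/X_G$ is isomorphic to a multiplicative group of positive rationals (the localization $\dim(\mathcal{R})^{-1}\dim(\hat{\mathcal{R}})$, a subgroup of $\mathbb{Q}^\times$), and the classification of one-dimensional $G$-symmetric QCA reduces to a subgroup of $H^2(G;U(1))\oplus\log\mathbb{Q}^\times$.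
   Context: $\hat{\mathcal{R}}=\{v\in\mathrm{Rep}(G):\exists\rho,\ v\otimes\rho\in\mathcal{R}\}$. The algebraic localization consists of formal fractions $v/\rho$ ($v\in\hat{\mathcal{R}}$, $\rho\in\mathcal{R}$) modulo $(v_1,\rho_1)\sim(v_2,\rho_2)$ iff there is $\tau\in\mathcal{R}$ with $\tau\otimes v_1\otimes\rho_2\simeq\tau\otimes v_2\otimes\rho_1$ (unitary equivalence). $X_G$ is the group of one-dimensional representations. $\dim(\sigma)$ is identified with the direct sum of $\dim\sigma$ copies of the trivial representation. *)

(* Defs.v *)
From HB Require Import structures.
From mathcomp Require Import all_boot all_order all_algebra all_fingroup.
From mathcomp Require Import mxrepresentation algC spectral.
Set Implicit Arguments. Unset Strict Implicit. Unset Printing Implicit Defensive.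
Import Order.TTheory GRing.Theory Num.Theory.
Local Open Scope ring_scope.

Record rrep (gT : finGroupType) := RRep { rdim : nat; rmx : gT -> 'M[algC]_rdim }.

(* Kronecker (tensor) product of matrices: the matrix, in the mxvec basis of
   'M_(m,n) ~ C^m (x) C^n, of X |-> A^T X B; its ((i1,i2),(j1,j2)) entry is
   A i1 j1 * B i2 j2 (row-vector convention, as in mathcomp). *)
Definition tensmx m n (A : 'M[algC]_m) (B : 'M[algC]_n) : 'M[algC]_(m * n) :=
  lin_mx (fun X : 'M[algC]_(m, n) => A^T *m X *m B).

Section Reps.
Variables (gT : finGroupType) (G : {group gT}).

Definition is_urep (r : rrep gT) : Prop :=
  [/\ (0 < rdim r)%N, mx_repr G (@rmx gT r)
    & {in G, forall g, @rmx gT r g \is unitarymx}].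

Definition rtensor (a b : rrep gT) : rrep gT :=
  @RRep gT (rdim a * rdim b) (fun g => tensmx (rmx a g) (rmx b g)).

(* Direct sum of n copies of the trivial representation (= dim identified
   with a representation); trivial representation is triv_rep 1. *)
Definition triv_rep (n : nat) : rrep gT := @RRep gT n (fun _ => 1%:M).

Definition reg_rep : rrep gT := @RRep gT #|G| (regular_repr algC G).

Definition ueq (a b : rrep gT) : Prop :=
  rdim a = rdim b /\
  exists U : 'M[algC]_(rdim a, rdim b),
    U \is unitarymx /\ {in G, forall g, rmx a g *m U = U *m rmx b g}.

Definition Rhat (R : rrep gT -> Prop) (v : rrep gT) : Prop :=
  is_urep v /\ exists rho, R rho /\ R (rtensor v rho).

(* Equality of formal fractions v1/rho1 = v2/rho2 in the algebraic
   localization R^{-1} R-hat. *)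
Definition frac_eq (R : rrep gT -> Prop) (v1 rho1 v2 rho2 : rrep gT) : Prop :=
  exists tau, R tau /\
    ueq (rtensor (rtensor tau v1) rho2) (rtensor (rtensor tau v2) rho1).

End Reps.

(* Main.v *)
Require Import Defs.
From HB Require Import structures.
From mathcomp Require Import all_boot all_order all_algebra all_fingroup.
From mathcomp Require Import mxrepresentation algC spectral.
From mathcomp Require Import ring.
Set Implicit Arguments. Unset Strict Implicit. Unset Printing Implicit Defensive.
Import Order.TTheory GRing.Theory Num.Theory.
Local Open Scope ring_scope.
Local Open Scope sesquilinear_scope.

Definition mxdec m n (k : 'I_(m*n)) : 'I_m * 'I_n :=
  enum_val (cast_ord (esym (mxvec_cast m n)) k).

Lemma mxdecK m n (i : 'I_m) (j : 'I_n) : mxdec (mxvec_index i j) = (i, j).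
Proof. by rewrite /mxdec /mxvec_index cast_ordK enum_rankK. Qed.

Lemma mxvec_index_inj m n (i i' : 'I_m) (j j' : 'I_n) :
  (mxvec_index i j == mxvec_index i' j') = (i == i') && (j == j').
Proof.
apply/eqP/andP => [H|[/eqP-> /eqP->]] //.
by have := mxdecK i j; rewrite H mxdecK => -[-> ->].
Qed.

Lemma sum_mxvec m n (F : 'I_(m*n) -> algC) :
  \sum_k F k = \sum_i \sum_j F (mxvec_index i j).
Proof.
rewrite pair_big /=.
rewrite (reindex (fun p : 'I_m * 'I_n => mxvec_index p.1 p.2)) //=.
exists (@mxdec m n) => [[i j] _|k _]; first by rewrite mxdecK.
by case/mxvec_indexP: k => i j; rewrite mxdecK.
Qed.

Lemma sum_pick (I : finType) (c : I) (F : I -> algC) :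
  \sum_x F x * (x == c)%:R = F c.
Proof.
rewrite (bigD1 c) //= eqxx mulr1 big1 ?addr0 // => x /negbTE ->.
by rewrite mulr0.
Qed.

Lemma tensmxE m n (A : 'M[algC]_m) (B : 'M[algC]_n) i j k l :
  tensmx A B (mxvec_index i j) (mxvec_index k l) = A i k * B j l.
Proof.
rewrite /tensmx /lin_mx /lin1_mx mxE /= vec_mx_delta mxvecE !mxE.
rewrite (bigD1 j) //= big1 ?addr0 => [|j' /negbTE nj]; last first.
  rewrite !mxE big1 ?mul0r // => x _; rewrite !mxE nj andbF mulr0 //.
rewrite !mxE (bigD1 i) //= big1 ?addr0 => [|x /negbTE nx]; last first.
  by rewrite !mxE nx mulr0.
by rewrite !mxE !eqxx mulr1.
Qed.

Lemma mx4P m n p q (M N : 'M[algC]_(m*n, p*q)) :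
  (forall i j k l, M (mxvec_index i j) (mxvec_index k l) = N (mxvec_index i j) (mxvec_index k l)) -> M = N.
Proof.
move=> H; apply/matrixP=> x y.
by case/mxvec_indexP: x => i j; case/mxvec_indexP: y => k l; apply: H.
Qed.

Lemma tensmx_mul m n (A C : 'M[algC]_m) (B D : 'M[algC]_n) :
  tensmx A B *m tensmx C D = tensmx (A *m C) (B *m D).
Proof.
apply: mx4P => i j k l; rewrite mxE tensmxE !mxE sum_mxvec big_distrl /=.
apply: eq_bigr => x _; rewrite big_distrr /=; apply: eq_bigr => y _.
by rewrite !tensmxE mulrACA.
Qed.

Lemma tensmx1 m n : tensmx (1%:M : 'M[algC]_m) (1%:M : 'M[algC]_n) = 1%:M.
Proof.
apply: mx4P => i j k l; rewrite tensmxE !mxE mxvec_index_inj.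
by case: (i == k); case: (j == l); rewrite ?mulr1 ?mulr0 ?mul0r.
Qed.

Lemma tensmx_adj m n (A : 'M[algC]_m) (B : 'M[algC]_n) :
  (tensmx A B)^t* = tensmx (A^t*) (B^t*).
Proof.
apply: mx4P => i j k l; rewrite [LHS]mxE [in LHS]mxE -[_ (mxvec_index k l) (mxvec_index i j)]/(tensmx A B _ _) !tensmxE !mxE rmorphM.
done.
Qed.

Lemma tensmx_unitary m n (A : 'M[algC]_m) (B : 'M[algC]_n) :
  A \is unitarymx -> B \is unitarymx -> tensmx A B \is unitarymx.
Proof.
move=> /unitarymxP HA /unitarymxP HB; apply/unitarymxP.
by rewrite tensmx_adj tensmx_mul HA HB tensmx1.
Qed.

Section U.
Variables (gT : finGroupType) (G : {group gT}).

Lemma ueq_trans (a b c : rrep gT) : ueq G a b -> ueq G b c -> ueq G a c.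
Proof.
case=> e1 [U [uU hU]] [e2 [V [uV hV]]]; split; first by rewrite e1.
exists (U *m V); split; first exact: mul_unitarymx.
by move=> g Gg; rewrite mulmxA hU // -!mulmxA hV.
Qed.

Lemma ueq_sym (a b : rrep gT) : ueq G a b -> ueq G b a.
Proof.
case: a => m fa; case: b => n fb; rewrite /ueq /= => -[e]; subst n.
case=> U [uU hU]; split => //; exists (U^t*); split; first by rewrite trmxC_unitary.
have UU : U^t* *m U = 1%:M by rewrite -invmx_unitary // mulVmx // unitarymx_unit.
move=> g Gg.
have := congr1 (fun X => U^t* *m X *m U^t*) (hU g Gg) => /=.
by rewrite !mulmxA UU mul1mx -!mulmxA (unitarymxP uU) mulmx1.
Qed.

Lemma triv_repr n : mx_repr G (@rmx gT (triv_rep gT n)).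
Proof. by split => //= x y _ _; rewrite mul1mx. Qed.

Lemma triv_unitary n g : (@rmx gT (triv_rep gT n) g) \is unitarymx.
Proof. by apply/unitarymxP; rewrite /= mul1mx trmx1 map_mx1. Qed.

End U.

Section K.
Variables (gT : finGroupType) (G : {group gT}).

Lemma regE h (g g2 : 'I_#|G|) :
  regular_repr algC G h g g2 = (g2 == gring_index G (enum_val g * h))%:R.
Proof. by rewrite /= !mxE eqxx. Qed.

Lemma sum_pickl (I : finType) (c : I) (F : I -> algC) :
  \sum_x (x == c)%:R * F x = F c.
Proof. by rewrite -(sum_pick c); apply: eq_bigr => x _; rewrite mulrC. Qed.

Variables (m n : nat) (fa : gT -> 'M[algC]_m) (fb : gT -> 'M[algC]_n).
Hypotheses (ra : mx_repr G fa) (rb : mx_repr G fb).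
Hypotheses (ua : {in G, forall g, fa g \is unitarymx}) (ub : {in G, forall g, fb g \is unitarymx}).

Definition Tm (g : 'I_#|G|) := tensmx (fa (enum_val g)^-1%g) (fb (enum_val g)^-1%g).

Definition Umx : 'M[algC]_(#|G| * m * n, #|G| * (m * n)) := \matrix_(x, y)
  (((mxdec (mxdec x).1).1 == (mxdec y).1)%:R *
    Tm (mxdec (mxdec x).1).1 (mxvec_index (mxdec (mxdec x).1).2 (mxdec x).2) (mxdec y).2).

Lemma UmxE g i j g' k :
  Umx (mxvec_index (mxvec_index g i) j) (mxvec_index g' k) = (g == g')%:R * Tm g (mxvec_index i j) k.
Proof. by rewrite mxE !mxdecK /=. Qed.

Lemma Umx_inter h : h \in G ->
  tensmx (tensmx (regular_repr algC G h) (fa h)) (fb h) *m Umx =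
  Umx *m tensmx (regular_repr algC G h) 1%:M.
Proof.
move=> Gh; apply: mx4P => gi j g' k; case/mxvec_indexP: gi => g i.
set c := gring_index G (enum_val g * h).
have Gg : enum_val g \in G by apply: enum_valP.
have ec : enum_val c = (enum_val g * h)%g by rewrite gring_indexK // groupM.
have Gc : ((enum_val c)^-1)%g \in G by rewrite groupV ec groupM.
rewrite !mxE [LHS]sum_mxvec [LHS]sum_mxvec.
under eq_bigr => g2 _ do under eq_bigr => i2 _ do
  under eq_bigr => j2 _ do rewrite !tensmxE UmxE regE.
rewrite (eq_bigr (fun g2 => (g2 == c)%:R * ((g2 == g')%:R *
   \sum_i2 \sum_j2 (fa h i i2 * fb h j j2 * Tm g2 (mxvec_index i2 j2) k)))); last first.
  move=> g2 _; rewrite !mulr_sumr; apply: eq_bigr => i2 _.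
  rewrite !mulr_sumr; apply: eq_bigr => j2 _; ring.
rewrite sum_pickl.
have -> : \sum_i2 \sum_j2 (fa h i i2 * fb h j j2 * Tm c (mxvec_index i2 j2) k)
   = (tensmx (fa h) (fb h) *m Tm c) (mxvec_index i j) k.
  by rewrite mxE sum_mxvec; apply: eq_bigr => i2 _; apply: eq_bigr => j2 _; rewrite tensmxE.
rewrite /Tm tensmx_mul -ra.2 // -rb.2 // ec invMg mulKVg.
rewrite sum_mxvec (bigD1 g) //= [X in _ + X]big1 ?addr0 => [|g2 ng2]; last first.
  by apply: big1 => k2 _; rewrite UmxE eq_sym (negbTE ng2) !mul0r.
rewrite (bigD1 k) //= [X in _ + X]big1 ?addr0 => [|k2 nk2]; last first.
  by rewrite tensmxE !mxE (negbTE nk2) !mulr0.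
rewrite UmxE tensmxE regE [1%:M _ _]mxE !eqxx -/c [g' == c]eq_sym /Tm.
by rewrite !mul1r mulr1 mulrC.
Qed.

Lemma Umx_unitary : Umx \is unitarymx.
Proof.
apply/unitarymxP; apply: mx4P => gi j gi' j'.
case/mxvec_indexP: gi => g i; case/mxvec_indexP: gi' => g' i'.
rewrite !mxE sum_mxvec.
rewrite (bigD1 g) //= [X in _ + X]big1 ?addr0 => [|g2 ng2]; last first.
  by apply: big1 => k _; rewrite UmxE eq_sym (negbTE ng2) !mul0r.
under eq_bigr => k _ do rewrite [(Umx^t*) _ _]mxE [(Umx^T) _ _]mxE !UmxE eqxx mul1r.
rewrite !mxvec_index_inj.
have [<-|ngg] := eqVneq g g'; last first.
  by rewrite big1 // => k _; rewrite mul0r rmorph0 mulr0.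
have Gg : ((enum_val g)^-1)%g \in G by rewrite groupV enum_valP.
have /unitarymxP := tensmx_unitary (ua Gg) (ub Gg).
move/matrixP => /(_ (mxvec_index i j) (mxvec_index i' j')).
rewrite [1%:M _ _]mxE mxvec_index_inj /= => <-.
rewrite mxE; apply: eq_bigr => k _; rewrite mul1r /Tm; congr (_ * _).
by rewrite [RHS]mxE [X in _ = X^*]mxE.
Qed.

End K.

Lemma K3 (gT : finGroupType) (G : {group gT}) (A B : rrep gT) :
  mx_repr G (@rmx gT A) -> {in G, forall g, @rmx gT A g \is unitarymx} ->
  mx_repr G (@rmx gT B) -> {in G, forall g, @rmx gT B g \is unitarymx} ->
  ueq G (rtensor (rtensor (reg_rep G) A) B)
        (rtensor (reg_rep G) (triv_rep gT (rdim A * rdim B))).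
Proof.
case: A => m fa; case: B => n fb /= ra ua rb ub.
split; first by rewrite /= mulnA.
exists (Umx G fa fb); split; first exact: Umx_unitary.
by move=> h Gh; apply: Umx_inter.
Qed.

Theorem mainTheorem13 (gT : finGroupType) (G : {group gT})
    (R : rrep gT -> Prop)
    (HRrep : forall r, R r -> is_urep G r)
    (HRtens : forall a b, R a -> R b -> R (rtensor a b))
    (HRtriv : R (triv_rep gT 1))
    (HRreg : R (reg_rep G)) :
  (forall sigma sigma', Rhat G R sigma -> R sigma' ->
     frac_eq G R sigma sigma' (triv_rep gT (rdim sigma)) (triv_rep gT (rdim sigma')))
  /\
  (forall v1 rho1 v2 rho2, Rhat G R v1 -> R rho1 -> Rhat G R v2 -> R rho2 ->
     (frac_eq G R v1 rho1 v2 rho2 <->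
      (rdim v1 * rdim rho2 = rdim v2 * rdim rho1)%N)).
Proof.
split.
  move=> s s' [[_ rs us] _] /HRrep [_ rs' us'].
  exists (reg_rep G); split => //.
  apply: ueq_trans (K3 rs us (triv_repr G _) (fun g _ => triv_unitary _ g)) _.
  apply: ueq_sym.
  exact: (K3 (triv_repr G _) (fun g _ => triv_unitary _ g) rs' us').
move=> v1 r1 v2 r2 [[_ rv1 uv1] _] /HRrep [_ rr1 ur1] [[_ rv2 uv2] _] /HRrep [_ rr2 ur2].
split.
  case=> t [/HRrep [t0 _ _] [/= e _]].
  by apply/eqP; rewrite -(eqn_pmul2l t0) !mulnA e.
move=> e; exists (reg_rep G); split => //.
apply: ueq_trans (K3 rv1 uv1 rr2 ur2) _; rewrite e.
exact: ueq_sym (K3 rv2 uv2 rr1 ur1).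
Qed.
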